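(* Let $M$ be a matroid and let $B_1,\dots,B_s$ be a partial shelling of $\mathcal{I}(M)$ such that the set $\{B_1,\dots,B_s\}$ is an order ideal of $\mathrm{Int}_<(M)$ for some total order $<$ on the ground set of $M$. Then the partial shelling is extendable, i.e. there is an ordering $B'_1,\dots,B'_t$ of the remaining bases of $M$ such that $B_1,\dots,B_s,B'_1,\dots,B'_t$ is a shelling order of $\mathcal{I}(M)$.
   Context: For a matroid $M$ on finite set $E$, $\mathcal{I}(M)$ is its independence complex, whose facets are the bases. A shelling order of a pure simplicial complex is a total order $F_1<\dots<F_k$ of its facets such that for each $j\ge2$, $\langle F_1,\dots,F_{j-1}\rangle\cap\langle F_j\rangle$ is pure of dimension one less than the complex ($\langle\mathcal{G}\rangle$ the complex generated by $\mathcal{G}$). A partial shelling is a sequence of bases $B_1,\dots,B_s$ that is a shelling order of the complex $\langle B_1,\dots,B_s\rangle$. For a total order $<$ on $E$ and a basis $B$, the internally passive set $IP_<(B)$ is the set of $b\in B$ for which there is $b'\notin B$ with $b'<b$ and $(B\setminus\{b\})\cup\{b'\}$ a basis. $\mathrm{Int}_<(M)$ is the poset on the bases of $M$ with $B\preceq B'$ iff $IP_<(B)\subseteq IP_<(B')$. An order ideal of a poset is a downward-closed subset. *)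

(* Defs.v *)
From mathcomp Require Import all_boot.
Set Implicit Arguments. Unset Strict Implicit. Unset Printing Implicit Defensive.

(* A matroid on the finite ground set T is given by its family of bases,
   satisfying the basis axioms: nonempty, and the basis exchange property. *)
Definition matroid_bases (T : finType) (bs : {set {set T}}) : Prop :=
  bs != set0 /\
  forall B1 B2, B1 \in bs -> B2 \in bs ->
    forall x, x \in B1 :\: B2 ->
      exists2 y, y \in B2 :\: B1 & y |: (B1 :\ x) \in bs.

Definition strict_total_order (T : finType) (lt : rel T) : Prop :=
  [/\ irreflexive lt, transitive lt &
      forall x y, x != y -> lt x y || lt y x].

(* pure complex: all maximal faces have exactly k elements
   (i.e. pure of dimension k-1) *)
Definition pure_of_size (T : finType) (K : {set T} -> bool) (k : nat) : Prop :=
  forall G, K G -> #|G| <= k /\ exists H, [/\ K H, G \subset H & #|H| = k].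

Definition gen_complex (T : finType) (s : seq {set T}) (G : {set T}) : bool :=
  has (fun F : {set T} => G \subset F) s.

Definition facet_size (T : finType) (s : seq {set T}) : nat :=
  \max_(F <- s) #|F|.

(* s (a duplicate-free list of facets) is a shelling order of <s>:
   for each j >= 2, <F_1..F_{j-1}> ∩ <F_j> is pure of dimension dim - 1 *)
Definition shelling_order (T : finType) (s : seq {set T}) : Prop :=
  uniq s /\
  forall j, 0 < j < size s ->
    pure_of_size
      (fun G => (G \subset nth set0 s j) && gen_complex (take j s) G)
      (facet_size s).-1.

Definition partial_shelling (T : finType) (bs : {set {set T}}) (s : seq {set T})
  : Prop := all (fun B => B \in bs) s /\ shelling_order s.

Definition IP (T : finType) (lt : rel T) (bs : {set {set T}}) (B : {set T})
  : {set T} :=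
  [set b in B | [exists b', [&& b' \notin B, lt b' b & b' |: (B :\ b) \in bs]]].

Definition int_order_ideal (T : finType) (lt : rel T) (bs : {set {set T}})
  (S : pred {set T}) : Prop :=
  (forall B, S B -> B \in bs) /\
  forall B B', S B -> B' \in bs -> IP lt bs B' \subset IP lt bs B -> S B'.

(* Main.v *)
Require Import Defs.
From mathcomp Require Import all_boot.
Set Implicit Arguments. Unset Strict Implicit. Unset Printing Implicit Defensive.

Definition exch (T : finType) (bs : {set {set T}}) := forall B1 B2, B1 \in bs -> B2 \in bs ->
    forall x, x \in B1 :\: B2 ->
      exists2 y, y \in B2 :\: B1 & y |: (B1 :\ x) \in bs.

Ltac hyp_rw :=
  repeat match goal with
  | H : is_true (~~ (?a == ?b)) |- context [?a == ?b] => rewrite (negbTE H)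
  | H : is_true (~~ (?a == ?b)) |- context [?b == ?a] => rewrite eq_sym (negbTE H)
  | H : is_true (~~ ?P) |- context [?P] => rewrite (negbTE H)
  | H : is_true ?P |- context [?P] => rewrite H
  | |- context [?a == ?a] => rewrite eqxx
  end.

Ltac bsolve := rewrite !inE; hyp_rw; rewrite /= ?andbF ?andbT ?orbT ?orbF ?negbK //.

Ltac set_solve :=
  let w := fresh "w" in apply/setP => w; rewrite !inE;
  repeat (match goal with
   | |- context [w == ?a] => case: (w =P a) => [->|/eqP ?]
   end; hyp_rw);
  hyp_rw;
  repeat match goal with
   | |- context [w \in ?X] => case: (w \in X)
   end; rewrite /= ?andbF ?andbT ?orbF ?orbT //.

Lemma antichain (T : finType) (bs : {set {set T}}) (hE : exch bs) B1 B2 :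
  B1 \in bs -> B2 \in bs -> B1 \subset B2 -> B1 = B2.
Proof.
move=> h1 h2 hs; apply/eqP; rewrite eqEsubset hs /=.
apply/subsetP => x hx; apply/negPn/negP => hn.
have hx' : x \in B2 :\: B1 by rewrite inE hn hx.
have [y] := hE _ _ h2 h1 x hx'.
rewrite inE => /andP[hy1 hy2] _.
by move: hy1; rewrite (subsetP hs y hy2).
Qed.

Lemma card_swap (T : finType) (B : {set T}) a b :
  a \in B -> b \notin B -> #|b |: (B :\ a)| = #|B|.
Proof.
move=> ha hb; rewrite cardsU1 !inE (negbTE hb) andbF /= (cardsD1 a B) ha.
by rewrite add1n.
Qed.

Lemma card_bases (T : finType) (bs : {set {set T}}) (hE : exch bs) B1 B2 :
  B1 \in bs -> B2 \in bs -> #|B1| = #|B2|.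
Proof.
move=> h1 h2; have [n] := ubnP #|B1 :\: B2|; elim: n B1 h1 => // n IH B1 h1 hn.
case: (set_0Vmem (B1 :\: B2)) => [e0|[a ha]].
  by rewrite (antichain hE h1 h2) //; apply/subsetP => x hx; apply/negPn/negP => hn2;
    move: e0 => /setP/(_ x); rewrite !inE hn2 hx.
have [b hb hB3] := hE _ _ h1 h2 a ha.
move: ha hb; rewrite !inE => /andP[ha2 ha1] /andP[hb1 hb2].
rewrite -(IH _ hB3).
  by rewrite card_swap.
rewrite -ltnS (leq_trans _ hn) // ltnS.
have -> : (b |: (B1 :\ a)) :\: B2 = (B1 :\: B2) :\ a.
  by set_solve.
by rewrite (cardsD1 a (B1 :\: B2)) !inE ha1 ha2.
Qed.

Lemma notbasisD (T : finType) (bs : {set {set T}}) (hE : exch bs) B x :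
  B \in bs -> x \in B -> (B :\ x) \notin bs.
Proof.
move=> hB hx; apply/negP => h; have := card_bases hE hB h.
by rewrite (cardsD1 x B) hx add1n => /esym; apply: n_Sn.
Qed.

Lemma notbasisU (T : finType) (bs : {set {set T}}) (hE : exch bs) B x u :
  B \in bs -> x \in B -> u \in B -> u != x -> (u |: (B :\ x)) \notin bs.
Proof.
move=> hB hx hu hux.
have -> : u |: (B :\ x) = B :\ x by set_solve.
exact: notbasisD.
Qed.

Lemma dual_exch (T : finType) (bs : {set {set T}}) (hE : exch bs) B1 B2 x :
  B1 \in bs -> B2 \in bs -> x \in B1 :\: B2 ->
  exists2 y, y \in B2 :\: B1 & x |: (B2 :\ y) \in bs.
Proof.
move=> h1 h2; have [n] := ubnP #|B1 :\: B2|; elim: n B1 h1 => // n IH B1 h1 hn hx.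
case: (set_0Vmem ((B1 :\: B2) :\ x)) => [e0|[a ha]].
  have [y hy hB3] := hE _ _ h1 h2 x hx.
  move: hx hy; rewrite !inE => /andP[hx2 hx1] /andP[hy1 hy2].
  have sub : y |: (B1 :\ x) \subset B2.
    apply/subsetP => w; rewrite !inE; case: (w =P y) => [->//|_] /andP[hwx hw1].
    apply/negPn/negP => hw2; move: e0 => /setP/(_ w); rewrite !inE hwx hw1 hw2 //.
  have e := antichain hE hB3 h2 sub.
  exists y; first by rewrite inE hy1 hy2.
  rewrite -e.
  have -> : x |: ((y |: (B1 :\ x)) :\ y) = B1 by set_solve.
  exact: h1.
move: ha; rewrite !inE => /andP[hax /andP[ha2 ha1]].
have ha' : a \in B1 :\: B2 by rewrite inE ha2 ha1.
have [b hb hB3] := hE _ _ h1 h2 a ha'.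
move: hb; rewrite !inE => /andP[hb1 hb2].
move: hx; rewrite inE => /andP[hx2 hx1].
have [||y hy hB] := IH _ hB3.
- rewrite -ltnS (leq_trans _ hn) // ltnS.
  have -> : (b |: (B1 :\ a)) :\: B2 = (B1 :\: B2) :\ a by set_solve.
  by rewrite (cardsD1 a (B1 :\: B2)) !inE ha1 ha2.
- by rewrite !inE hx2 hx1 (eq_sym x a) hax orbT.
exists y => //; move: hy; rewrite !inE => /andP[hy3 hy2].
rewrite hy2 andbT; apply/negP => hy1; move: hy3; rewrite hy1 andbT.
case: (y =P a) => [e|_]; last by rewrite orbT.
by move: ha2; rewrite -e hy2.
Qed.

Lemma lt_min (T : finType) (lt : rel T) (hlt : strict_total_order lt) (S : {set T}) z0 :
  z0 \in S -> exists2 z, z \in S & forall y, y \in S -> y != z -> lt z y.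
Proof.
case: hlt => hirr htr htot hz0.
case: (@arg_minnP _ z0 (mem S) (fun z => #|[set y in S | lt y z]|) hz0) => z hz hmin.
exists z => // y hy hyz; have := htot _ _ hyz; case/orP => // hyz'.
have := hmin y hy; rewrite leqNgt => /negP; case; apply: proper_card.
apply/properP; split.
  apply/subsetP => w; rewrite !inE => /andP[-> hw] /=; exact: htr hw hyz'.
by exists y; rewrite !inE ?hy ?hyz' ?hirr.
Qed.

Lemma inIP (T : finType) (lt : rel T) (bs : {set {set T}}) (B : {set T}) b :
  reflect (b \in B /\ exists b', [/\ b' \notin B, lt b' b & b' |: (B :\ b) \in bs])
    (b \in IP lt bs B).
Proof.
rewrite /IP inE; apply: (iffP andP) => [[h /existsP[b' /and3P[h1 h2 h3]]]|[h [b' [h1 h2 h3]]]].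
  by split => //; exists b'.
by split => //; apply/existsP; exists b'; rewrite h1 h2 h3.
Qed.

Lemma claimA (T : finType) (lt : rel T) (bs : {set {set T}}) (hE : exch bs)
  (hlt : strict_total_order lt) B b :
  B \in bs -> b \in IP lt bs B ->
  exists z, [/\ z \notin B, (z |: (B :\ b)) \in bs &
                IP lt bs (z |: (B :\ b)) \proper IP lt bs B].
Proof.
move=> hB hbI; have hlt' := hlt; case: hlt' => hirr htr htot.
case/inIP: (hbI) => hbB [w [hwB hwb hwbs]].
pose S := [set u | (u \notin B) && (u |: (B :\ b) \in bs)].
have hwS : w \in S by rewrite inE hwB hwbs.
have [z hzS hzmin] := lt_min hlt hwS.
move: (hzS); rewrite inE => /andP[hzB hzbs].
have hzb : lt z b.
  case: (w =P z) => [<-//|/eqP hwz]; exact: htr (hzmin _ hwS hwz) hwb.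
have hbz : b != z by apply/eqP => e; rewrite e (negbTE hzB) in hbB.
have hirr' : forall u, lt u u = false by move=> u; apply: hirr.
exists z; split => //; apply/properP; split; last first.
  exists b => //; apply/negP => /inIP [+ _]; rewrite !inE eqxx (negbTE hbz) //.
apply/subsetP => e /inIP [heB'' [f [hf1 hf2 hf3]]]; apply/inIP.
move: heB''; rewrite !inE; case: (e =P z) => [ez| /eqP hez /andP[heb heB]].
  exfalso; subst e.
  rewrite setU1K in hf3; last by rewrite !inE (negbTE hzB) andbF.
  case: (f =P b) => [efb|/eqP hfb].
    by subst f; have := htr _ _ _ hzb hf2; rewrite hirr'.
  have hfB : f \notin B by move: hf1; rewrite !inE hfb /= negb_or => /andP[_].
  have hfz : f != z by move: hf1; rewrite !inE negb_or => /andP[].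
  have hfS : f \in S by rewrite inE hfB hf3.
  by have := htr _ _ _ (hzmin _ hfS hfz) hf2; rewrite hirr'.
split => //.
case: (f =P b) => [efb|/eqP hfb].
  subst f; exists z; split => //; first exact: htr hzb hf2.
  suff <- : b |: ((z |: (B :\ b)) :\ e) = z |: (B :\ e) by [].
  by set_solve.
have hfB : f \notin B by move: hf1; rewrite !inE hfb /= negb_or => /andP[_].
have hfz : f != z by move: hf1; rewrite !inE negb_or => /andP[].
case hfe: (f |: (B :\ e) \in bs); first by exists f.
set D := f |: ((z |: (B :\ b)) :\ e) in hf3.
have hzD : z \in D :\: B by rewrite /D !inE; hyp_rw.
have [y hy hyD] := hE _ _ hf3 hB z hzD.
have hyeb : (y == b) || (y == e).
  case: (y =P b) => [//|/eqP ?]; case: (y =P e) => [//|/eqP ?].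
  move: hy; rewrite /D !inE; hyp_rw.
  by case: (y \in B); rewrite /= ?andbF ?andbT ?orbT ?orbF.
case/orP: hyeb => /eqP ey; subst y.
  have eD : b |: (D :\ z) = f |: (B :\ e) by rewrite /D; set_solve.
  by rewrite eD hfe in hyD.
have eD : e |: (D :\ z) = f |: (B :\ b) by rewrite /D; set_solve.
rewrite eD in hyD.
have hfS : f \in S by rewrite inE hfB hyD.
have hzf := hzmin _ hfS hfz.
have heD : e \in B :\: D.
  rewrite !inE heB eqxx /= andbT negb_or andbT; apply/eqP => efe.
  by rewrite -efe heB in hfB.
have [y' hy' hy'D] := hE _ _ hB hf3 e heD.
have : (y' == f) || (y' == z).
  case: (y' =P f) => [//|/eqP ?]; case: (y' =P z) => [//|/eqP ?].
  move: hy'; rewrite /D !inE; hyp_rw.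
  by case: (y' \in B); rewrite /= ?andbF ?andbT ?orbT ?orbF.
case/orP => /eqP ey'; subst y'; first by rewrite hfe in hy'D.
by exists z; split => //; exact: htr hzf hf2.
Qed.

Lemma two_cases (T : finType) (X : {set T}) (y a b : T) :
  y \in X -> y \notin (X :\ a :\ b) -> (y == a) || (y == b).
Proof. by rewrite !inE => ->; case: (y =P a); case: (y =P b). Qed.

Lemma OL (T : finType) (bs : {set {set T}}) (hE : exch bs) n A B' x y0 :
  #|A :\: B'| < n -> A \in bs -> B' \in bs -> x \in A -> x \in B' -> y0 \notin A ->
  y0 |: (A :\ x) \in bs -> y0 |: (B' :\ x) \notin bs ->
  (forall e, e \in A -> e != x -> y0 |: (A :\ e) \in bs -> e |: (B' :\ x) \notin bs) ->
  False.
Proof.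
elim: n A B' => // n IH A B' hn hA hB' hxA hxB' hy0A hy0 hHy0 hHC.
have hy0x : y0 != x by apply/eqP => e; rewrite e hxA in hy0A.
case: (set_0Vmem (A :\: B')) => [e0|[e0 he0]].
  have sub : A \subset B'.
    apply/subsetP => w hw; apply/negPn/negP => hw2.
    by move: e0 => /setP/(_ w); rewrite !inE hw hw2.
  by have := antichain hE hA hB' sub => eAB; rewrite -eAB hy0 in hHy0.
case: (boolP [exists e in A :\: B', e |: (B' :\ x) \notin bs]).
  case/existsP => e /andP[heAB he].
  have [f hf hB''] := dual_exch hE hA hB' heAB.
  move: heAB hf; rewrite !inE => /andP[heB' heA] /andP[hfA hfB'].
  have hfx : f != x by apply/eqP => e1; rewrite e1 hxA in hfA.
  have hex : e != x by apply/eqP => e1; rewrite e1 hxB' in heB'.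
  have hfe : f != e by apply/eqP => e1; rewrite e1 heA in hfA.
  have Hmove : forall u, u != x -> u |: (B' :\ x) \notin bs ->
      u |: ((e |: (B' :\ f)) :\ x) \notin bs.
    move=> u hux hu; apply/negP => hD.
    case hu'': (u \in (e |: (B' :\ f)) :\ x).
      by move: hD; apply/negP; apply: notbasisU => //; [bsolve|
        move: hu''; rewrite inE => /andP[]].
    case: (u =P f) => [euf|/eqP huf].
      subst u; have eq1 : f |: ((e |: (B' :\ f)) :\ x) = e |: (B' :\ x) by set_solve.
      by rewrite eq1 (negbTE he) in hD.
    have huB' : u \notin B'.
      apply/negP => hu1; move: hu''; rewrite !inE hux hu1 huf /= orbT //.
    have hxD : x \in B' :\: (u |: ((e |: (B' :\ f)) :\ x)) by bsolve.
    have [y hy hyb] := hE _ _ hB' hD x hxD.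
    have : (y == u) || (y == e).
      case: (y =P u) => [//|/eqP ?]; case: (y =P e) => [//|/eqP ?].
      move: hy; rewrite !inE; hyp_rw; by case: (y \in B'); rewrite /= ?andbF ?andbT ?orbT ?orbF.
    by case/orP => /eqP ey; subst y; [rewrite hyb in hu | rewrite hyb in he].
  apply: (IH A (e |: (B' :\ f))) => //.
  - rewrite -ltnS (leq_trans _ hn) // ltnS.
    have -> : A :\: (e |: (B' :\ f)) = (A :\: B') :\ e by set_solve.
    by rewrite (cardsD1 e (A :\: B')) !inE heA heB'.
  - by rewrite !inE hxB' (eq_sym x f) hfx orbT.
  - exact: Hmove.
  - move=> g hg hgx hgb; exact: Hmove (hHC g hg hgx hgb).
move/existsPn => hall.
have := hall e0; rewrite he0 /= negbK => he0b.
move: he0; rewrite !inE => /andP[he0B' he0A].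
have he0x : e0 != x by apply/eqP => e1; rewrite e1 hxB' in he0B'.
have hy0e0 : y0 |: (A :\ e0) \notin bs.
  by apply/negP => h; have := hHC e0 he0A he0x h; rewrite he0b.
have he0AB : e0 \in A :\: B' by rewrite inE he0A he0B'.
have [f hf hAo] := hE _ _ hA hB' e0 he0AB.
move: hf; rewrite !inE => /andP[hfA hfB'].
have hfy0 : f != y0 by apply/eqP => e1; rewrite e1 (negbTE hy0e0) in hAo.
have hfx : f != x by apply/eqP => e1; rewrite e1 hxA in hfA.
have hfe0 : f != e0 by apply/eqP => e1; rewrite e1 he0A in hfA.
have hy0e : y0 != e0 by apply/eqP => e1; rewrite e1 he0A in hy0A.
apply: (IH (f |: (A :\ e0)) B') => //.
- rewrite -ltnS (leq_trans _ hn) // ltnS.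
  have -> : (f |: (A :\ e0)) :\: B' = (A :\: B') :\ e0 by set_solve.
  by rewrite (cardsD1 e0 (A :\: B')) !inE he0A he0B'.
- by bsolve.
- by bsolve.
-
  have he0B1 : e0 \in (y0 |: (A :\ x)) :\: (f |: (A :\ e0)) by rewrite !inE; hyp_rw.
  have [y hy hyb] := hE _ _ hy0 hAo e0 he0B1.
  have : (y == f) || (y == x).
    case: (y =P f) => [//|/eqP ?]; case: (y =P x) => [//|/eqP ?].
    move: hy; rewrite !inE; hyp_rw; by case: (y \in A); rewrite /= ?andbF ?andbT ?orbT ?orbF.
  case/orP => /eqP ey; subst y.
    by have <- : f |: ((y0 |: (A :\ x)) :\ e0) = y0 |: ((f |: (A :\ e0)) :\ x) by set_solve.
  have eq1 : x |: ((y0 |: (A :\ x)) :\ e0) = y0 |: (A :\ e0) by set_solve.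
  by rewrite eq1 (negbTE hy0e0) in hyb.
- move=> g hg hgx hgb.
  move: hg; rewrite !inE; case: (g =P f) => [egf|/eqP hgf] /=.
    subst g; have eq1 : y0 |: ((f |: (A :\ e0)) :\ f) = y0 |: (A :\ e0) by set_solve.
    by rewrite eq1 (negbTE hy0e0) in hgb.
  move=> /andP[hge0 hgA]; apply: hHC => //.
  have hfD : f \in (y0 |: ((f |: (A :\ e0)) :\ g)) :\: A by rewrite !inE; hyp_rw.
  have [y hy hyb] := hE _ _ hgb hA f hfD.
  have : (y == e0) || (y == g).
    case: (y =P e0) => [//|/eqP ?]; case: (y =P g) => [//|/eqP ?].
    move: hy; rewrite !inE; hyp_rw; by case: (y \in A); rewrite /= ?andbF ?andbT ?orbT ?orbF.
  case/orP => /eqP ey; subst y.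
    by have <- : e0 |: ((y0 |: ((f |: (A :\ e0)) :\ g)) :\ f) = y0 |: (A :\ g) by set_solve.
  have eq1 : g |: ((y0 |: ((f |: (A :\ e0)) :\ g)) :\ f) = y0 |: (A :\ e0) by set_solve.
  by rewrite eq1 (negbTE hy0e0) in hyb.
Qed.

Lemma claimB (T : finType) (lt : rel T) (bs : {set {set T}}) (hE : exch bs)
  (hlt : strict_total_order lt) B B' :
  B \in bs -> B' \in bs -> IP lt bs B \subset B' -> B != B' ->
  IP lt bs B \proper IP lt bs B'.
Proof.
move=> hB hB' hsub hneq; have hlt' := hlt; case: hlt' => hirr htr htot.
apply/properP; split.
  apply/subsetP => x hx; have hxB' := subsetP hsub x hx.
  case/inIP: (hx) => hxB [y0 [hy0B hy0x hy0bs]].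
  apply/negPn/negP => hn.
  have hy0x' : y0 != x by apply/eqP => e; rewrite e hxB in hy0B.
  apply: (@OL _ _ hE #|B :\: B'|.+1 B B' x y0) => //.
    apply/negP => h; case hy0B': (y0 \in B').
      by move: h; apply/negP; apply: notbasisU.
    by case/negP: hn; apply/inIP; split => //; exists y0; rewrite hy0B'.
  move=> e heB hex hey0; apply/negP => h.
  case heB': (e \in B').
    by move: h; apply/negP; apply: notbasisU.
  have heI : e \notin IP lt bs B.
    by apply/negP => /(subsetP hsub); rewrite heB'.
  have hey : e != y0 by apply/eqP => e1; by rewrite -e1 heB in hy0B.
  have ley : lt e y0.
    case/orP: (htot _ _ hey) => // hy0e.
    by case/negP: heI; apply/inIP; split => //; exists y0.
  by case/negP: hn; apply/inIP; split => //; exists e; rewrite heB' (htr _ _ _ ley hy0x).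
pose S := (B :\: B') :|: (B' :\: B).
have [z0 hz0] : exists z0, z0 \in S.
  case: (set_0Vmem S) => [e0|[z0 hz0]]; last by exists z0.
  have sub : B \subset B'.
    apply/subsetP => w hw; apply/negPn/negP => hw2.
    by move: e0 => /setP/(_ w); rewrite !inE hw hw2.
  by rewrite (antichain hE hB hB' sub) eqxx in hneq.
have [z hzS hzmin] := lt_min hlt hz0.
move: (hzS); rewrite inE => /orP[] hz.
  have [y hy hyb] := dual_exch hE hB hB' hz.
  have hyS : y \in S by rewrite inE hy orbT.
  have hyz : y != z by apply/eqP => e1; move: hy hz; rewrite e1 !inE; case: (z \in B); case: (z \in B').
  have lzy := hzmin _ hyS hyz.
  move: hy hz; rewrite !inE => /andP[hyB hyB'] /andP[hzB' hzB].
  exists y; first by apply/inIP; split => //; exists z.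
  by apply/negP => /inIP [+ _]; rewrite (negbTE hyB).
have [y hy hyb] := dual_exch hE hB' hB hz.
have hyS : y \in S by rewrite inE hy.
have hyz : y != z by apply/eqP => e1; move: hy hz; rewrite e1 !inE; case: (z \in B); case: (z \in B').
have lzy := hzmin _ hyS hyz.
move: hy hz; rewrite !inE => /andP[hyB' hyB] /andP[hzB hzB'].
have : y \in IP lt bs B by apply/inIP; split => //; exists z.
by move/(subsetP hsub); rewrite (negbTE hyB').
Qed.

Lemma facet_const (T : finType) (l : seq {set T}) r :
  l != [::] -> (forall F, F \in l -> #|F| = r) -> facet_size l = r.
Proof.
elim: l => // F l IH _ h; rewrite /facet_size big_cons h ?mem_head //.
case: l IH h => [|F' l'] IH h; first by rewrite big_nil maxn0.
rewrite /facet_size in IH; rewrite IH ?maxnn //.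
by move=> F1 hF1; apply: h; rewrite in_cons hF1 orbT.
Qed.

Theorem corollary5p3 (T : finType) (bs : {set {set T}}) (lt : rel T)
  (s : seq {set T}) :
  matroid_bases bs ->
  strict_total_order lt ->
  partial_shelling bs s ->
  int_order_ideal lt bs (fun B => B \in s) ->
  exists t : seq {set T},
    perm_eq (s ++ t) (enum bs) /\ shelling_order (s ++ t).
Proof.
move=> [hne hE] hlt [/allP hall [huniq hsh]] [hid1 hid2].
pose key (B : {set T}) := #|IP lt bs B|.
pose leK := fun A B : {set T} => key A <= key B.
have leK_total : total leK by move=> A B; apply: leq_total.
have leK_tr : transitive leK by move=> A B C; apply: leq_trans.
have leK_refl : reflexive leK by move=> A; apply: leqnn.
pose t := sort leK [seq B <- enum bs | B \notin s].
have memt : forall B, (B \in t) = (B \in bs) && (B \notin s).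
  by move=> B; rewrite mem_sort mem_filter mem_enum andbC.
have ut : uniq t by rewrite sort_uniq filter_uniq // enum_uniq.
have ust : uniq (s ++ t).
  rewrite cat_uniq huniq ut andbT; apply/hasPn => B; rewrite memt => /andP[_ ->] //.
have memst : forall B, (B \in s ++ t) = (B \in bs).
  move=> B; rewrite mem_cat memt; case hBs: (B \in s) => /=; last by rewrite andbT.
  by rewrite (hall _ hBs).
exists t; split.
  by apply: uniq_perm => // [|B]; rewrite ?enum_uniq // memst mem_enum.
split => // j /andP[hj0 hj].
have hsz : forall F, F \in s ++ t -> forall B, B \in s ++ t -> #|F| = #|B|.
  by move=> F hF B hB; apply: (card_bases hE); rewrite -memst.
case: (ltnP j (size s)) => hjs.
  have hs0 : 0 < size s by apply: leq_ltn_trans hjs.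
  have hsne : s != [::] by apply/eqP => e; rewrite e in hs0.
  have hfs : facet_size (s ++ t) = facet_size s.
    pose F0 := nth set0 s 0.
    have hF0 : F0 \in s ++ t by rewrite mem_cat mem_nth.
    rewrite (@facet_const _ _ #|F0|); last by move=> F hF; apply: hsz.
      rewrite (@facet_const _ _ #|F0|) //.
      by move=> F hF; apply: hsz => //; rewrite mem_cat hF.
    by apply/eqP => e; move: hF0; rewrite e.
  rewrite hfs take_cat nth_cat hjs; apply: hsh; rewrite hj0 hjs.
  done.
have hi : j - size s < size t by rewrite ltn_subLR // -size_cat.
rewrite nth_cat take_cat ltnNge hjs /=.
set i := j - size s in hi *.
set B := nth set0 t i.
have hBt : B \in t by apply: mem_nth.
have := hBt; rewrite memt => /andP[hB hBs].
have hfs : facet_size (s ++ t) = #|B|.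
  have hBst : B \in s ++ t by rewrite mem_cat hBt orbT.
  apply: facet_const; first by apply/eqP => e; move: hBst; rewrite e.
  by move=> F hF; apply: hsz; rewrite // mem_cat hBt orbT.
rewrite hfs.
have hsrt : sorted leK t by apply: sort_sorted.
have hbefore : forall F, F \in take i t -> key F <= key B.
  move=> F hF; have hFt : F \in t := mem_take hF.
  rewrite in_take // in hF.
  have := @sorted_leq_nth _ _ leK_tr leK_refl set0 _ hsrt (index F t) i.
  rewrite nth_index //; apply; rewrite ?inE ?index_mem //; exact: ltnW.
have hafter : forall F, F \in t -> F \notin take i t -> key B <= key F.
  move=> F hFt hF; rewrite in_take // -leqNgt in hF.
  have := @sorted_leq_nth _ _ leK_tr leK_refl set0 _ hsrt i (index F t).
  rewrite nth_index //; apply; rewrite ?inE ?index_mem //.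
have hBnt : B \notin take i t by rewrite in_take // index_uniq // ltnn.
move=> G /andP[hGB /hasP[F hF hGF]].
have hFbs : F \in bs.
  rewrite -memst mem_cat; move: hF; rewrite mem_cat => /orP[->//|/mem_take ->].
  by rewrite orbT.
have hFB : F != B.
  apply/eqP => e; move: hF; rewrite mem_cat e (negbTE hBs) /=.
  by rewrite (negbTE hBnt).
have hBF : ~~ (B \subset F).
  by apply/negP => h; rewrite (antichain hE hB hFbs h) eqxx in hFB.
have [x hxB hxF] := subsetPn hBF.
have hGlt : #|G| < #|B|.
  apply: proper_card; apply/properP; split => //; exists x => //.
  by apply/negP => /(subsetP hGF); rewrite (negbTE hxF).
split; first by rewrite -ltnS (ltn_predK hGlt).
case hIG: (IP lt bs B \subset G).
  exfalso.
  have hIF : IP lt bs B \subset F by apply: subset_trans hIG hGF.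
  have hBF' : B != F by rewrite eq_sym.
  have hpr := claimB hE hlt hB hFbs hIF hBF'.
  move: hF; rewrite mem_cat => /orP[hFs|hFt].
    by have := hid2 F B hFs hB (proper_sub hpr); rewrite (negbTE hBs).
  have h1 := hbefore F hFt; have h2 := proper_card hpr.
  by have := leq_trans h2 h1; rewrite ltnn.
have [b hbI hbG] := subsetPn (negbT hIG).
have [z [hzB hzbs hzpr]] := claimA hE hlt hB hbI.
have hbB : b \in B by case/inIP: hbI.
exists (B :\ b); split.
- apply/andP; split; first exact: subD1set.
  apply/hasP; exists (z |: (B :\ b)); last exact: subsetUr.
  rewrite mem_cat; case hB''s: (z |: (B :\ b) \in s) => //=.
  have hB''t : z |: (B :\ b) \in t by rewrite memt hzbs hB''s.
  apply/negPn/negP => hn; have h1 := hafter _ hB''t hn; have h2 := proper_card hzpr.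
  by have := leq_trans h2 h1; rewrite ltnn.
- apply/subsetP => w hw; rewrite !inE (subsetP hGB w hw) andbT.
  by apply/eqP => e; subst w; rewrite hw in hbG.
- by rewrite (cardsD1 b B) hbB add1n.
Qed.
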